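(* Let $G$ be a finitely generated group, $p$ a prime, and $x\in G$. Then $RG_p\big(G/\langle\langle x\rangle\rangle\big)\ge RG_p(G)-1$.
   Context: $\langle\langle x\rangle\rangle$ denotes the normal closure of $x$ in $G$. For a group $A$, $d(A)$ is the minimal number of generators and $d_p(A)=d\big(A/[A,A]A^p\big)$. For a finitely generated group $G$, $RG_p(G)=\inf_H\frac{d_p(H)-1}{[G:H]}$, the infimum over normal subgroups $H\trianglelefteq G$ of $p$-power index. *)

(* Defs.v *)
From HB Require Import structures.
From mathcomp Require Import all_boot all_order all_algebra.
From mathcomp Require Import boolp classical_sets reals.

Set Implicit Arguments.
Unset Strict Implicit.
Unset Printing Implicit Defensive.

(* Possibly infinite groups: MathComp's [groupType] (boot/monoid.v). *)

Section GroupNotions.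
Variable G : groupType.
Local Open Scope group_scope.

Definition subgrp (H : G -> Prop) : Prop :=
  H 1 /\ (forall a b, H a -> H b -> H (a * b)) /\ (forall a, H a -> H a^-1).

Definition normal_subgrp (H : G -> Prop) : Prop :=
  subgrp H /\ (forall h g, H h -> H (h ^ g)).

Definition gen (A : G -> Prop) : G -> Prop :=
  fun g => forall K : G -> Prop, subgrp K -> (forall a, A a -> K a) -> K g.

Definition normal_closure (x : G) : G -> Prop :=
  fun g => forall K : G -> Prop, normal_subgrp K -> K x -> K g.

Definition fin_gen : Prop :=
  exists s : seq G, forall g, gen (fun a => a \in s) g.

(* [G : H] = n : the left cosets of H in G are exactly s_0 H, ..., s_(n-1) H,
   pairwise distinct *)
Definition has_index (H : G -> Prop) (n : nat) : Prop :=
  exists s : seq G, size s = n /\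
    (forall g, exists i, (i < n)%N /\ H ((nth 1 s i)^-1 * g)) /\
    (forall i j, (i < n)%N -> (j < n)%N ->
       H ((nth 1 s i)^-1 * nth 1 s j) -> i = j).

Definition commp (p : nat) (H : G -> Prop) : G -> Prop :=
  gen (fun c => (exists a b, H a /\ H b /\ c = [~ a, b]) \/
                (exists a, H a /\ c = a ^+ p)).

(* H is generated by k elements modulo [H,H]H^p, i.e. H/[H,H]H^p is
   generated by the images of k elements of H *)
Definition gen_mod_commp (p : nat) (H : G -> Prop) (k : nat) : Prop :=
  exists s : seq G, size s = k /\ (forall a, a \in s -> H a) /\
    (forall h, H h <-> gen (fun a => a \in s \/ commp p H a) h).

Definition is_dp (p : nat) (H : G -> Prop) (k : nat) : Prop :=
  gen_mod_commp p H k /\ (forall j, gen_mod_commp p H j -> (k <= j)%N).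

End GroupNotions.

Definition RG (R : realType) (G : groupType) (p : nat) : R :=
  inf [set r : R | exists (H : G -> Prop) (e k : nat),
         normal_subgrp H /\ has_index H (p ^ e) /\ is_dp p H k /\
         r = ((k%:R - 1) / (p ^ e)%:R)%R].

(* Main.v *)
Require Import Defs.
From HB Require Import structures.
From mathcomp Require Import all_boot all_order all_algebra.
From mathcomp Require Import boolp classical_sets reals.
From mathcomp Require Import ring lra.

Set Implicit Arguments.
Unset Strict Implicit.
Unset Printing Implicit Defensive.

Section Gen.
Variable G : groupType.
Local Open Scope group_scope.
Implicit Types (A K : G -> Prop).

Lemma gen_subgrp A : subgrp (gen A).
Proof.
split; first by move=> K [].
split.
- by move=> a b Ha Hb K sK AK; case: (sK) => _ [M _]; apply: M; [apply: Ha|apply: Hb].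
- by move=> a Ha K sK AK; case: (sK) => _ [_ V]; apply: V; apply: Ha.
Qed.

Lemma gen_incl A a : A a -> gen A a.
Proof. by move=> Aa K _ AK; apply: AK. Qed.

Lemma gen_min A K : subgrp K -> (forall a, A a -> K a) -> forall g, gen A g -> K g.
Proof. by move=> sK AK g Hg; apply: Hg. Qed.

Lemma subgrpX K a n : subgrp K -> K a -> K (a ^+ n).
Proof.
move=> [K1 [KM _]] Ka; elim: n => [|n IH]; first by rewrite expg0.
by rewrite expgS; apply: KM.
Qed.

Lemma subgrpR K a b : subgrp K -> K a -> K b -> K [~ a, b].
Proof.
move=> [K1 [KM KV]] Ka Kb; rewrite commgEl conjgE.
by apply KM; [apply KV|apply KM; [apply KV|apply KM]].
Qed.

Lemma commp_sub p K : subgrp K -> forall g, commp p K g -> K g.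
Proof.
move=> sK; apply: gen_min => // c [[a [b [Ka [Kb ->]]]]|[a [Ka ->]]].
  exact: subgrpR.
exact: subgrpX.
Qed.

Lemma commp_R p K a b : K a -> K b -> commp p K [~ a, b].
Proof. by move=> Ka Kb; apply: gen_incl; left; exists a, b. Qed.

Lemma commp_X p K a : K a -> commp p K (a ^+ p).
Proof. by move=> Ka; apply: gen_incl; right; exists a. Qed.

End Gen.

Section Hom.
Variables (G Q : groupType) (f : G -> Q).
Hypothesis fM : forall a b : G, f (a * b)%g = (f a * f b)%g.
Local Open Scope group_scope.

Lemma f1 : f 1 = 1.
Proof.
have : f 1 * f 1 = f 1 * 1 by rewrite -fM !mulg1.
exact: mulgI.
Qed.

Lemma fV a : f a^-1 = (f a)^-1.
Proof.
apply: (@mulgI _ (f a)); rewrite -fM !mulgV; exact: f1.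
Qed.

Lemma fJ a b : f (a ^ b) = f a ^ f b.
Proof. by rewrite !conjgE !fM fV. Qed.

Lemma fR a b : f [~ a, b] = [~ f a, f b].
Proof. by rewrite !commgEl fM fV fJ. Qed.

Lemma fX a n : f (a ^+ n) = f a ^+ n.
Proof. elim: n => [|n IH]; first by rewrite !expg0 f1. by rewrite !expgS fM IH. Qed.

Lemma preim_subgrp (K : Q -> Prop) : subgrp K -> subgrp (fun g => K (f g)).
Proof.
move=> [K1 [KM KV]]; split; first by rewrite f1.
split; first by move=> a b Ha Hb; rewrite fM; apply: KM.
by move=> a Ha; rewrite fV; apply: KV.
Qed.

Lemma preim_normal (K : Q -> Prop) : normal_subgrp K -> normal_subgrp (fun g => K (f g)).
Proof.
move=> [sK nK]; split; first exact: preim_subgrp.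
by move=> h g Hh; rewrite fJ; apply: nK.
Qed.

End Hom.

Section Lift.
Variables (G Q : groupType) (f : G -> Q) (x : G).
Hypothesis fM : forall a b : G, f (a * b)%g = (f a * f b)%g.
Hypothesis fs : forall q : Q, exists g : G, f g = q.
Hypothesis fk : forall g : G, f g = 1%g <-> normal_closure x g.
Local Open Scope group_scope.

Definition lift (q : Q) : G := proj1_sig (cid (fs q)).
Lemma liftK q : f (lift q) = q.
Proof. exact: (proj2_sig (cid (fs q))). Qed.

Lemma fx1 : f x = 1.
Proof. by apply/fk => K _. Qed.

Lemma lift_index (H : Q -> Prop) n : has_index H n -> has_index (fun g => H (f g)) n.
Proof.
move=> [s [sz [cov dis]]]; exists (map lift s); rewrite size_map; split=> //.
split.
  move=> g; have [i [lin Hi]] := cov (f g); exists i; split=> //.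
  by rewrite (nth_map 1) ?sz // fM fV // liftK.
move=> i j lin ljn; rewrite !(nth_map 1) ?sz // fM fV // !liftK.
exact: dis.
Qed.

Lemma lift_gmc p (H : Q -> Prop) n k : normal_subgrp H -> has_index H n ->
  gen_mod_commp p H k -> gen_mod_commp p (fun g => H (f g)) (k + n).
Proof.
move=> nH hi [s [sz [sH gH]]].
have [r [rz [rcov _]]] := lift_index hi.
set H' := fun g => H (f g).
have nH' : normal_subgrp H' by apply: preim_normal.
have [sH' _] := nH'.
set s' := map lift s ++ map (fun t => x ^ t) r.
set K := gen (fun a => a \in s' \/ commp p H' a).
have sK : subgrp K := gen_subgrp _.
have KH : forall g, K g -> H' g.
  apply: gen_min => // a [|]; last exact: commp_sub.
  rewrite mem_cat => /orP[/mapP[q qs ->]|/mapP[t _ ->]].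
    by rewrite /H' liftK; apply: sH.
  rewrite /H' fJ // fx1 conj1g; by case: sH'; rewrite /H' f1.
have KJ : forall a h, K a -> H' h -> K (a ^ h).
  move=> a h Ka Hh; have -> : a ^ h = a * [~ a, h] by rewrite commgEl mulVKg.
  case: sK => _ [KM _]; apply: KM => //.
  by apply: gen_incl; right; apply: commp_R => //; apply: KH.
have Kx : forall t, K (x ^ t).
  move=> t; have [i [lin Hi]] := rcov t.
  have -> : t = nth 1 r i * ((nth 1 r i)^-1 * t) by rewrite mulVKg.
  rewrite conjgM; apply: KJ => //.
  apply: gen_incl; left; rewrite mem_cat; apply/orP; right.
  by apply: map_f; apply: mem_nth; rewrite rz.
have NK : forall g, normal_closure x g -> K g.
  move=> g ng.
  have N : normal_subgrp (fun g => forall t, K (g ^ t)).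
    split; last by move=> h u Hh t; rewrite -conjgM.
    split; first by move=> t; rewrite conj1g; case: sK.
    split; first by move=> a b Ha Hb t; rewrite conjMg; case: sK => _ [KM _]; apply: KM.
    by move=> a Ha t; rewrite conjVg; case: sK => _ [_ KV]; apply: KV.
  move: (ng _ N Kx).
  by move=> /(_ 1); rewrite conjg1.
have Im : forall q, gen (fun a => a \in s \/ commp p H a) q -> exists g, K g /\ f g = q.
  apply: gen_min.
  - case: sK => K1 [KM KV]; split; first by exists 1; rewrite f1.
    split; first by move=> a b [u [Ku <-]] [v [Kv <-]]; exists (u * v); rewrite fM; split=> //; apply: KM.
    by move=> a [u [Ku <-]]; exists u^-1; rewrite fV //; split=> //; apply: KV.
  - move=> a [as_|ca].
      exists (lift a); rewrite liftK; split=> //; apply: gen_incl; left.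
      by rewrite mem_cat map_f.
    move: a ca; apply: gen_min.
      case: sK => K1 [KM KV]; split; first by exists 1; rewrite f1.
      split; first by move=> a b [u [Ku <-]] [v [Kv <-]]; exists (u * v); rewrite fM; split=> //; apply: KM.
      by move=> a [u [Ku <-]]; exists u^-1; rewrite fV //; split=> //; apply: KV.
    move=> c [[a [b [Ha [Hb ->]]]]|[a [Ha ->]]].
      exists [~ lift a, lift b]; rewrite fR // !liftK; split=> //.
      by apply: gen_incl; right; apply: commp_R; rewrite /H' liftK.
    exists (lift a ^+ p); rewrite fX // liftK; split=> //.
    by apply: gen_incl; right; apply: commp_X; rewrite /H' liftK.
exists s'; split; first by rewrite size_cat !size_map sz rz.
split.
  by move=> a as'; apply: KH; apply: gen_incl; left.
move=> h; split; last exact: KH.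
move=> Hh.
have [g [Kg fg]] : exists g, K g /\ f g = f h by apply: Im; apply/gH.
have -> : h = g * (g^-1 * h) by rewrite mulVKg.
case: sK => _ [KM _]; apply: KM => //; apply: NK; apply/fk.
by rewrite fM fV // fg mulVg.
Qed.
End Lift.
Import Order.TTheory GRing.Theory Num.Theory.

Lemma dp_exists (G : groupType) p (H : G -> Prop) j :
  gen_mod_commp p H j -> exists k, is_dp p H k /\ (k <= j)%N.
Proof.
move=> gj.
have ex : exists j, `[< gen_mod_commp p H j >] by exists j; apply/asboolP.
case: (ex_minnP ex) => k /asboolP gk mk.
exists k; split; last by apply: mk; apply/asboolP.
by split=> // i gi; apply: mk; apply/asboolP.
Qed.

Lemma fg_gmc (G Q : groupType) (f : G -> Q) p :
  (forall a b : G, f (a * b)%g = (f a * f b)%g) ->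
  (forall q : Q, exists g : G, f g = q) ->
  fin_gen G -> exists j, gen_mod_commp p (fun _ : Q => True) j.
Proof.
move=> fM fs [sG gG]; exists (size (map f sG)); exists (map f sG); split=> //.
split=> // h; split=> // _.
have [g <-] := fs h.
have sP := preim_subgrp fM (gen_subgrp (fun a => a \in map f sG \/ commp p (fun _ : Q => True) a)).
apply: (gen_min sP _ (gG g)) => a as_; apply: gen_incl; left; exact: map_f.
Qed.

Lemma index1 (G : groupType) : has_index (fun _ : G => True) 1.
Proof.
exists [:: 1%g]; split=> //; split; first by move=> g; exists 0%N.
by move=> [|i] [|j].
Qed.

Lemma normalT (G : groupType) : normal_subgrp (fun _ : G => True).
Proof. by []. Qed.

Lemma real_step (R : realType) (k k' P : nat) : (0 < P)%N -> (k' <= k + P)%N ->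
  (((k'%:R - 1) / P%:R) <= ((k%:R - 1) / P%:R) + 1 :> R)%R.
Proof.
move=> P0 kk.
have Pp : (0 < P%:R :> R)%R by rewrite ltr0n.
have -> : ((k%:R - 1) / P%:R + 1 = (k%:R + P%:R - 1) / P%:R :> R)%R.
  by field; rewrite gt_eqF.
apply: ler_wpM2r; first by rewrite invr_ge0 ltW.
by rewrite lerD2r -natrD ler_nat.
Qed.

Lemma real_lb (R : realType) (k P : nat) : (0 < P)%N ->
  (- 1 <= (k%:R - 1) / P%:R :> R)%R.
Proof.
move=> P0; have Pp : (0 < P%:R :> R)%R by rewrite ltr0n.
rewrite ler_pdivlMr // mulN1r lerBrDl.
have : (1 <= P%:R :> R)%R by rewrite ler1n.
have : (0 <= k%:R :> R)%R by [].
move=> h1 h2. lra.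
Qed.

Theorem corollary3p3 (R : realType) (G Q : groupType) (p : nat) (x : G)
  (f : G -> Q) :
  fin_gen G -> prime p ->
  (forall a b : G, f (a * b)%g = (f a * f b)%g) ->
  (forall q : Q, exists g : G, f g = q) ->
  (forall g : G, f g = 1%g <-> normal_closure x g) ->
  (RG R G p - 1 <= RG R Q p)%R.
Proof.
move=> fgG pp fM fs fk.
have P0 : forall e, (0 < p ^ e)%N by move=> e; rewrite expn_gt0 prime_gt0.
rewrite /RG; apply: lb_le_inf.
  have [j gj] := fg_gmc p fM fs fgG; have [k [dk _]] := dp_exists gj.
  exists (((k%:R - 1) / (p ^ 0)%:R))%R; exists (fun _ => True), 0%N, k.
  by split; [exact: normalT|split; [exact: index1|split]].
move=> r [H [e [k [nH [hi [dk ->]]]]]].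
have g' := lift_gmc fM fs fk nH hi dk.1.
have [k' [dk' le']] := dp_exists g'.
rewrite lerBlDr; apply: le_trans (real_step R (P0 e) le').
apply: ge_inf.
  exists (-1)%R => y [H0 [e0 [k0 [_ [_ [_ ->]]]]]]; exact: real_lb.
exists (fun g => H (f g)), e, k'; split; first exact: preim_normal.
by split; [exact: lift_index|split].
Qed.
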